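(* Let $Y \sim N(\theta, \sigma^2)$ with $\sigma^2>0$ known and $\theta\in\mathbb{R}$ unknown, and let the selection function be $p(y) = \mathbf{1}(y>t)$ for some fixed $t\in\mathbb{R}$, so that the selection event is $S=\{Y>t\}$ and the selection probability is $\varphi(\theta) = \mathbb{P}_\theta(Y>t) = \Phi\{(\theta-t)/\sigma\}$. For $y\in\mathbb{R}$ let \[ \Pi(\theta\mid y) = \frac{\int_{-\infty}^\theta \phi\{\sigma^{-1}(\tilde{\theta} - y) \}\, \varphi(\tilde\theta)^{-1} \,\mathrm{d}\tilde\theta}{\int_{-\infty}^\infty \phi\{\sigma^{-1}(\tilde{\theta} - y) \}\, \varphi(\tilde\theta)^{-1}\, \mathrm{d}\tilde\theta} \] be the selective posterior distribution function of $\theta$ based on the uniform prior $\pi(\theta)\propto 1$, and let $\Pi^{-1}(\alpha\mid y)$ denote its $\alpha$-quantile (inverse in $\theta$). Then \[ \mathbb{P}_{\theta_0}\{\theta_0 \leq \Pi^{-1}(\alpha\mid Y)\mid S\} < \alpha \quad \text{for all } (\alpha, \theta_0) \in (0,1)\times \mathbb{R}, \] where the probability is computed under the conditional distribution of $Y\sim N(\theta_0,\sigma^2)$ given $Y>t$.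
   Context: $\phi$ and $\Phi$ denote the standard normal density and distribution function respectively. The selective posterior is obtained by attaching the prior to the selective likelihood, i.e. the density of $Y$ conditional on selection, $f(y\mid S;\theta)=f(y;\theta)p(y)/\varphi(\theta)$, where $\varphi(\theta)=\mathbb{E}_\theta[p(Y)]$ is the probability of selection under parameter $\theta$. *)

(* Defs.v *)
From Stdlib Require Import Reals ClassicalDescription.
From Coquelicot Require Import Coquelicot.
Open Scope R_scope.

Definition std_normal_pdf (x : R) : R := exp (- (x ^ 2) / 2) / sqrt (2 * PI).

Definition std_normal_cdf (x : R) : R :=
  RInt_gen std_normal_pdf (Rbar_locally m_infty) (at_point x).

Definition normal_pdf (sigma theta y : R) : R :=
  std_normal_pdf ((y - theta) / sigma) / sigma.

Definition sel_fun (t y : R) : R := if Rlt_dec t y then 1 else 0.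

Definition sel_prob (sigma t theta : R) : R := std_normal_cdf ((theta - t) / sigma).

Definition sel_density (sigma t theta y : R) : R :=
  normal_pdf sigma theta y * sel_fun t y / sel_prob sigma t theta.

Definition post_kernel (sigma t y th : R) : R :=
  std_normal_pdf ((th - y) / sigma) / sel_prob sigma t th.

Definition sel_post_cdf (sigma t y theta : R) : R :=
  RInt_gen (post_kernel sigma t y) (Rbar_locally m_infty) (at_point theta)
  / RInt_gen (post_kernel sigma t y) (Rbar_locally m_infty) (Rbar_locally p_infty).

Definition sel_cond_prob (sigma t theta0 : R) (A : R -> Prop) : R :=
  RInt_gen (fun y => (if excluded_middle_informative (A y) then 1 else 0)
                      * sel_density sigma t theta0 y)
           (Rbar_locally m_infty) (Rbar_locally p_infty).

(* Main.v *)
Require Import Defs.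
From Stdlib Require Import Reals Lra Psatz ClassicalDescription Classical.
From Coquelicot Require Import Coquelicot.
Open Scope R_scope.


Lemma dplus (f g : R -> R) (x a b : R) : is_derive f x a -> is_derive g x b -> is_derive (fun y => f y + g y) x (a + b).
Proof. intros. apply (@is_derive_plus R_AbsRing R_NormedModule f g x a b); auto. Qed.
Lemma dminus (f g : R -> R) (x a b : R) : is_derive f x a -> is_derive g x b -> is_derive (fun y => f y - g y) x (a - b).
Proof. intros. apply (@is_derive_minus R_AbsRing R_NormedModule f g x a b); auto. Qed.
Lemma dopp (f : R -> R) (x a : R) : is_derive f x a -> is_derive (fun y => - f y) x (- a).
Proof. intros. apply (@is_derive_opp R_AbsRing R_NormedModule f x a); auto. Qed.
Lemma dconst (c x : R) : is_derive (fun _ => c) x 0.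
Proof. apply (@is_derive_const R_AbsRing R_NormedModule). Qed.
Lemma did (x : R) : is_derive (fun y => y) x 1.
Proof. apply (@is_derive_id R_AbsRing). Qed.
Lemma dmult (f g : R -> R) (x a b : R) : is_derive f x a -> is_derive g x b -> is_derive (fun y => f y * g y) x (a * g x + f x * b).
Proof. intros. apply (is_derive_mult f g x a b); auto. intros; apply Rmult_comm. Qed.
Lemma dscal (f : R -> R) (k x a : R) : is_derive f x a -> is_derive (fun y => k * f y) x (k * a).
Proof. intros. apply is_derive_scal; auto. Qed.
Lemma ddiv (f g : R -> R) (x a b : R) : is_derive f x a -> is_derive g x b -> g x <> 0 ->
  is_derive (fun y => f y / g y) x ((a * g x - f x * b) / g x ^ 2).
Proof. intros. apply is_derive_div; auto. Qed.
Lemma dcomp (F g : R -> R) (x a b : R) : is_derive F (g x) a -> is_derive g x b -> is_derive (fun y => F (g y)) x (b * a).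
Proof. intros. apply (@is_derive_comp R_AbsRing R_NormedModule F g x a b); auto. Qed.
Lemma dexp (g : R -> R) (x b : R) : is_derive g x b -> is_derive (fun y => exp (g y)) x (b * exp (g x)).
Proof. intros. apply dcomp; auto. apply is_derive_exp. Qed.
Lemma daff (F : R -> R) (c s x l : R) : s <> 0 -> is_derive F ((x - c) / s) l -> is_derive (fun y => F ((y - c) / s)) x (l / s).
Proof.
  intros Hs H. replace (l / s) with ((1 / s) * l) by (field; auto).
  apply dcomp; auto. auto_derive; auto.
Qed.
Lemma deq (f : R -> R) (x a b : R) : is_derive f x a -> a = b -> is_derive f x b.
Proof. intros H ->; auto. Qed.
Ltac rr := match goal with |- ?a = ?b => change (@eq R a b) end.


Definition cont (f : R -> R) := forall x, continuous f x.
Definition ILm (f : R -> R) (b l : R) := is_lim (fun a => RInt f a b) m_infty l.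
Definition ILp (f : R -> R) (a l : R) := is_lim (fun b => RInt f a b) p_infty l.

Lemma exRI f a b : cont f -> ex_RInt f a b.
Proof. intros H; apply (@ex_RInt_continuous R_CompleteNormedModule); intros; apply H. Qed.

Lemma RIc f a b : cont f -> is_RInt f a b (RInt f a b).
Proof. intros H. apply (@RInt_correct R_CompleteNormedModule). apply exRI; auto. Qed.

Lemma ILm_gen f b l : cont f -> ILm f b l ->
  is_RInt_gen f (Rbar_locally m_infty) (at_point b) l.
Proof.
  intros Hc H P HP.
  apply Filter_prod with (fun a => P (RInt f a b)) (fun y => y = b).
  - apply H. exact HP.
  - reflexivity.
  - intros a y Ha ->. exists (RInt f a b). split; [apply RIc; auto| exact Ha].
Qed.

Lemma ILp_gen f a l : cont f -> ILp f a l ->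
  is_RInt_gen f (at_point a) (Rbar_locally p_infty) l.
Proof.
  intros Hc H P HP.
  apply Filter_prod with (fun y => y = a) (fun b => P (RInt f a b)).
  - reflexivity.
  - apply H. exact HP.
  - intros y b -> Hb. exists (RInt f a b). split; [apply RIc; auto| exact Hb].
Qed.

Lemma ILm_unique f b l1 l2 : ILm f b l1 -> ILm f b l2 -> l1 = l2.
Proof.
  intros H1 H2. apply is_lim_unique in H1. apply is_lim_unique in H2.
  rewrite H1 in H2. now injection H2.
Qed.

Lemma ILp_unique f b l1 l2 : ILp f b l1 -> ILp f b l2 -> l1 = l2.
Proof.
  intros H1 H2. apply is_lim_unique in H1. apply is_lim_unique in H2.
  rewrite H1 in H2. now injection H2.
Qed.

Lemma RInt_Ch f a b c : cont f -> RInt f a b + RInt f b c = RInt f a c.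
Proof. intros H. apply (RInt_Chasles f a b c); apply exRI; auto. Qed.

Lemma ILm_chasles f b c l : cont f -> ILm f b l -> ILm f c (l + RInt f b c).
Proof.
  intros Hc H. unfold ILm.
  apply is_lim_ext with (fun a => RInt f a b + RInt f b c).
  { intros a. apply RInt_Ch; auto. }
  apply is_lim_plus'; auto. apply is_lim_const.
Qed.

Lemma ILp_chasles f a c l : cont f -> ILp f a l -> ILp f c (RInt f c a + l).
Proof.
  intros Hc H. unfold ILp.
  apply is_lim_ext with (fun b => RInt f c a + RInt f a b).
  { intros b. apply RInt_Ch; auto. }
  apply is_lim_plus'; auto. apply is_lim_const.
Qed.

Lemma cont_minus f g : cont f -> cont g -> cont (fun x => f x - g x).
Proof. intros Hf Hg x. apply (continuous_minus f g); auto. Qed.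
Lemma cont_plus f g : cont f -> cont g -> cont (fun x => f x + g x).
Proof. intros Hf Hg x. apply (continuous_plus f g); auto. Qed.
Lemma cont_mult f g : cont f -> cont g -> cont (fun x => f x * g x).
Proof. intros Hf Hg x. apply (continuous_mult f g); auto. Qed.
Lemma cont_const c : cont (fun _ => c).
Proof. intros x. apply continuous_const. Qed.

Lemma RInt_minusR f g a b : cont f -> cont g ->
  RInt (fun x => f x - g x) a b = RInt f a b - RInt g a b.
Proof. intros Hf Hg. apply (RInt_minus f g); apply exRI; auto. Qed.
Lemma RInt_plusR f g a b : cont f -> cont g ->
  RInt (fun x => f x + g x) a b = RInt f a b + RInt g a b.
Proof. intros Hf Hg. apply (RInt_plus f g); apply exRI; auto. Qed.
Lemma RInt_scalR f c a b : cont f -> RInt (fun x => c * f x) a b = c * RInt f a b.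
Proof. intros Hf. apply (RInt_scal f a b c); apply exRI; auto. Qed.

Lemma ILm_minus f g b l1 l2 : cont f -> cont g -> ILm f b l1 -> ILm g b l2 ->
  ILm (fun x => f x - g x) b (l1 - l2).
Proof.
  intros Hf Hg H1 H2. unfold ILm.
  apply is_lim_ext with (fun a => RInt f a b - RInt g a b).
  { intros a. rewrite RInt_minusR; auto. }
  apply is_lim_minus'; auto.
Qed.
Lemma ILp_minus f g b l1 l2 : cont f -> cont g -> ILp f b l1 -> ILp g b l2 ->
  ILp (fun x => f x - g x) b (l1 - l2).
Proof.
  intros Hf Hg H1 H2. unfold ILp.
  apply is_lim_ext with (fun a => RInt f b a - RInt g b a).
  { intros a. rewrite RInt_minusR; auto. }
  apply is_lim_minus'; auto.
Qed.
Lemma ILm_scal f c b l : cont f -> ILm f b l -> ILm (fun x => c * f x) b (c * l).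
Proof.
  intros Hf H1. unfold ILm.
  apply is_lim_ext with (fun a => c * RInt f a b).
  { intros a. rewrite RInt_scalR; auto. }
  apply (is_lim_scal_l _ c m_infty l); auto.
Qed.
Lemma ILp_scal f c b l : cont f -> ILp f b l -> ILp (fun x => c * f x) b (c * l).
Proof.
  intros Hf H1. unfold ILp.
  apply is_lim_ext with (fun a => c * RInt f b a).
  { intros a. rewrite RInt_scalR; auto. }
  apply (is_lim_scal_l _ c p_infty l); auto.
Qed.
Lemma ILm_ext f g b l : (forall x, f x = g x) -> ILm f b l -> ILm g b l.
Proof.
  intros E H. unfold ILm. apply is_lim_ext with (fun a => RInt f a b); auto.
  intros a. apply RInt_ext. intros; auto.
Qed.
Lemma ILp_ext f g b l : (forall x, f x = g x) -> ILp f b l -> ILp g b l.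
Proof.
  intros E H. unfold ILp. apply is_lim_ext with (fun a => RInt f b a); auto.
  intros a. apply RInt_ext. intros; auto.
Qed.

Lemma lim_le_m g (l M : R) : is_lim g m_infty l ->
  (exists A, forall a, a < A -> g a <= M) -> l <= M.
Proof.
  intros H [A HA].
  assert (Rbar_le l M).
  { apply (is_lim_le_loc g (fun _ => M) m_infty); auto.
    - exists A. auto.
    - apply is_lim_const. }
  exact H0.
Qed.
Lemma lim_ge_m g (l M : R) : is_lim g m_infty l ->
  (exists A, forall a, a < A -> M <= g a) -> M <= l.
Proof.
  intros H [A HA].
  assert (Rbar_le M l).
  { apply (is_lim_le_loc (fun _ => M) g m_infty); auto.
    - exists A. auto.
    - apply is_lim_const. }
  exact H0.
Qed.
Lemma lim_le_p g (l M : R) : is_lim g p_infty l ->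
  (exists A, forall a, A < a -> g a <= M) -> l <= M.
Proof.
  intros H [A HA].
  assert (Rbar_le l M).
  { apply (is_lim_le_loc g (fun _ => M) p_infty); auto.
    - exists A. auto.
    - apply is_lim_const. }
  exact H0.
Qed.
Lemma lim_ge_p g (l M : R) : is_lim g p_infty l ->
  (exists A, forall a, A < a -> M <= g a) -> M <= l.
Proof.
  intros H [A HA].
  assert (Rbar_le M l).
  { apply (is_lim_le_loc (fun _ => M) g p_infty); auto.
    - exists A. auto.
    - apply is_lim_const. }
  exact H0.
Qed.

Lemma RInt_ge0 f a b : cont f -> a <= b -> (forall x, a <= x <= b -> 0 <= f x) -> 0 <= RInt f a b.
Proof. intros Hc Hab H. apply RInt_ge_0; auto. apply exRI; auto. intros; apply H; lra. Qed.

Lemma RInt_pos f a b : cont f -> a < b -> (forall x, a < x < b -> 0 < f x) -> 0 < RInt f a b.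
Proof.
  intros Hc Hab H.
  assert (E: RInt (fun _ => 0) a b = 0).
  { rewrite RInt_const. unfold scal; simpl. unfold mult; simpl. ring. }
  rewrite <- E. apply RInt_lt; auto; intros; try apply continuous_const; try apply Hc.
Qed.

Lemma ILm_ge f b l : cont f -> (forall x, x <= b -> 0 <= f x) -> ILm f b l ->
  forall a, a <= b -> RInt f a b <= l.
Proof.
  intros Hc Hp H a Ha. apply (lim_ge_m _ _ _ H). exists a. intros a' Ha'.
  rewrite <- (RInt_Ch f a' a b Hc). assert (0 <= RInt f a' a). { apply RInt_ge0; [exact Hc|lra|intros; apply Hp; lra]. } lra.
Qed.
Lemma ILp_ge f b l : cont f -> (forall x, b <= x -> 0 <= f x) -> ILp f b l ->
  forall a, b <= a -> RInt f b a <= l.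
Proof.
  intros Hc Hp H a Ha. apply (lim_ge_p _ _ _ H). exists a. intros a' Ha'.
  rewrite <- (RInt_Ch f b a a' Hc). assert (0 <= RInt f a a'). { apply RInt_ge0; [exact Hc|lra|intros; apply Hp; lra]. } lra.
Qed.

Lemma ILm_deriv (f G : R -> R) (g0 b : R) : cont f -> (forall x, is_derive G x (f x)) -> is_lim G m_infty g0 ->
  ILm f b (G b - g0).
Proof.
  intros Hc HD HL. unfold ILm.
  apply is_lim_ext with (fun a => G b - G a).
  { intros a. symmetry. apply is_RInt_unique. apply (is_RInt_derive G f); intros; [apply HD|apply Hc]. }
  apply is_lim_minus'; [apply is_lim_const|exact HL].
Qed.
Lemma ILp_deriv (f G : R -> R) (g1 a : R) : cont f -> (forall x, is_derive G x (f x)) -> is_lim G p_infty g1 ->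
  ILp f a (g1 - G a).
Proof.
  intros Hc HD HL. unfold ILp.
  apply is_lim_ext with (fun b => G b - G a).
  { intros b. symmetry. apply is_RInt_unique. apply (is_RInt_derive G f); intros; [apply HD|apply Hc]. }
  apply is_lim_minus'; [exact HL|apply is_lim_const].
Qed.


Lemma ballR (x y : R) (e : posreal) : Rabs (y - x) < e -> ball x e y.
Proof. intros H. exact H. Qed.

Lemma ILm_exists f b M : cont f -> (forall x, x <= b -> 0 <= f x) ->
  (forall a, a <= b -> RInt f a b <= M) -> exists l, ILm f b l.
Proof.
  intros Hc Hp HM.
  set (E := fun v => exists a, a <= b /\ v = RInt f a b).
  assert (HB : bound E). { exists M. intros v [a [Ha ->]]. apply HM; auto. }
  assert (HE : exists v, E v). { exists (RInt f b b). exists b. split; [lra|auto]. }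
  destruct (completeness E HB HE) as [l [Hub Hlub]].
  exists l. unfold ILm, is_lim. apply filterlim_locally. intros eps.
  assert (Ha0 : exists a0, a0 <= b /\ l - eps < RInt f a0 b).
  { apply NNPP. intros Hn.
    assert (l <= l - eps).
    { apply Hlub. intros v [a [Ha ->]].
      destruct (Rle_lt_dec (RInt f a b) (l - eps)); auto.
      exfalso; apply Hn; exists a; split; auto. }
    destruct eps; simpl in *; lra. }
  destruct Ha0 as [a0 [Ha0 Hl]].
  simpl. exists a0. intros x Hx. apply ballR.
  assert (RInt f x b <= l). { apply Hub. exists x. split; [lra|auto]. }
  rewrite <- (RInt_Ch f x a0 b Hc).
  assert (0 <= RInt f x a0). { apply RInt_ge0; [exact Hc|lra|intros; apply Hp; lra]. }
  rewrite <- (RInt_Ch f x a0 b Hc) in H.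
  apply Rabs_def1; lra.
Qed.

Lemma ILp_exists f b M : cont f -> (forall x, b <= x -> 0 <= f x) ->
  (forall a, b <= a -> RInt f b a <= M) -> exists l, ILp f b l.
Proof.
  intros Hc Hp HM.
  set (E := fun v => exists a, b <= a /\ v = RInt f b a).
  assert (HB : bound E). { exists M. intros v [a [Ha ->]]. apply HM; auto. }
  assert (HE : exists v, E v). { exists (RInt f b b). exists b. split; [lra|auto]. }
  destruct (completeness E HB HE) as [l [Hub Hlub]].
  exists l. unfold ILp, is_lim. apply filterlim_locally. intros eps.
  assert (Ha0 : exists a0, b <= a0 /\ l - eps < RInt f b a0).
  { apply NNPP. intros Hn.
    assert (l <= l - eps).
    { apply Hlub. intros v [a [Ha ->]].
      destruct (Rle_lt_dec (RInt f b a) (l - eps)); auto.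
      exfalso; apply Hn; exists a; split; auto. }
    destruct eps; simpl in *; lra. }
  destruct Ha0 as [a0 [Ha0 Hl]].
  simpl. exists a0. intros x Hx. apply ballR.
  assert (RInt f b x <= l). { apply Hub. exists x. split; [lra|auto]. }
  rewrite <- (RInt_Ch f b a0 x Hc).
  assert (0 <= RInt f a0 x). { apply RInt_ge0; [exact Hc|lra|intros; apply Hp; lra]. }
  rewrite <- (RInt_Ch f b a0 x Hc) in H.
  apply Rabs_def1; lra.
Qed.

Lemma ILm_pos f b l : cont f -> (forall x, x <= b -> 0 <= f x) -> ILm f b l ->
  forall a, a < b -> (forall x, a < x < b -> 0 < f x) -> 0 < l.
Proof.
  intros Hc Hp H a Hab Hs. apply Rlt_le_trans with (RInt f a b).
  apply RInt_pos; auto. apply ILm_ge; auto. lra.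
Qed.
Lemma ILp_pos f b l : cont f -> (forall x, b <= x -> 0 <= f x) -> ILp f b l ->
  forall a, b < a -> (forall x, b < x < a -> 0 < f x) -> 0 < l.
Proof.
  intros Hc Hp H a Hab Hs. apply Rlt_le_trans with (RInt f b a).
  apply RInt_pos; auto. apply ILp_ge; auto. lra.
Qed.

Lemma total_bound f c l0 l1 : cont f -> (forall x, 0 <= f x) -> ILm f c l0 -> ILp f c l1 ->
  forall a b, a <= b -> RInt f a b <= l0 + l1.
Proof.
  intros Hc Hp H0 H1 a b Hab.
  set (a' := Rmin a c). set (b' := Rmax b c).
  assert (RInt f a' a + RInt f a b + RInt f b b' = RInt f a' c + RInt f c b').
  { rewrite (RInt_Ch f a' a b Hc), (RInt_Ch f a' b b' Hc), <- (RInt_Ch f a' c b' Hc). ring. }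
  assert (0 <= RInt f a' a). { apply RInt_ge0; auto. unfold a'; apply Rmin_l. }
  assert (0 <= RInt f b b'). { apply RInt_ge0; auto. unfold b'; apply Rmax_l. }
  assert (RInt f a' c <= l0). { apply ILm_ge; auto. unfold a'; apply Rmin_r. }
  assert (RInt f c b' <= l1). { apply ILp_ge; auto. unfold b'; apply Rmax_r. }
  lra.
Qed.

Lemma lim_exp_lin_m c d : 0 < c -> is_lim (fun x => exp (c * x + d)) m_infty 0.
Proof.
  intros Hc. unfold is_lim. apply filterlim_locally. intros eps.
  simpl. exists ((ln eps - d) / c). intros x Hx. apply ballR.
  rewrite Rminus_0_r, Rabs_pos_eq by (apply Rlt_le, exp_pos).
  rewrite <- (exp_ln eps) by (destruct eps; auto).
  apply exp_increasing.
  apply Rmult_lt_compat_r with (r := c) in Hx; auto.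
  unfold Rdiv in Hx. rewrite Rmult_assoc, Rinv_l, Rmult_1_r in Hx by lra. lra.
Qed.
Lemma lim_exp_lin_p c d : c < 0 -> is_lim (fun x => exp (c * x + d)) p_infty 0.
Proof.
  intros Hc. unfold is_lim. apply filterlim_locally. intros eps.
  simpl. exists ((ln eps - d) / c). intros x Hx. apply ballR.
  rewrite Rminus_0_r, Rabs_pos_eq by (apply Rlt_le, exp_pos).
  rewrite <- (exp_ln eps) by (destruct eps; auto).
  apply exp_increasing.
  apply Rmult_lt_compat_r with (r := - c) in Hx; [|lra].
  unfold Rdiv in Hx. 
  replace ((ln eps - d) * / c * - c) with (-(ln eps - d)) in Hx by (field; lra). nra.
Qed.

Lemma squeeze_m (f g : R -> R) : (forall x, 0 <= f x <= g x) -> is_lim g m_infty 0 -> is_lim f m_infty 0.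
Proof.
  intros H Hg. apply is_lim_le_le_loc with (fun _ => 0) g; auto.
  simpl. exists 0. intros; apply H. apply is_lim_const.
Qed.
Lemma squeeze_p (f g : R -> R) : (forall x, 0 <= f x <= g x) -> is_lim g p_infty 0 -> is_lim f p_infty 0.
Proof.
  intros H Hg. apply is_lim_le_le_loc with (fun _ => 0) g; auto.
  simpl. exists 0. intros; apply H. apply is_lim_const.
Qed.


Notation phi := std_normal_pdf.
Notation Phi := std_normal_cdf.

Lemma der_cont (f : R -> R) : (forall x, exists l, is_derive f x l) -> cont f.
Proof. intros H x. apply (@ex_derive_continuous R_AbsRing R_NormedModule). destruct (H x) as [l Hl]. exists l; exact Hl. Qed.

Lemma RInt_der (G f : R -> R) a b : (forall x, is_derive G x (f x)) -> cont f -> @eq R (RInt f a b) (G b - G a).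
Proof.
  intros HD Hc. apply is_RInt_unique. apply (@is_RInt_derive R_CompleteNormedModule G f).
  intros; apply HD. intros; apply Hc.
Qed.

Lemma s2pi : 2 <= sqrt (2 * PI).
Proof.
  assert (E : sqrt (2*2) = 2) by (apply sqrt_square; lra).
  rewrite <- E at 1. apply sqrt_le_1_alt.
  pose proof PI2_3_2. lra.
Qed.

Lemma phi_pos x : 0 < phi x.
Proof. unfold std_normal_pdf. apply Rdiv_lt_0_compat. apply exp_pos. pose proof s2pi; lra. Qed.

Lemma phi_le_exp x : phi x <= exp (- (x^2)/2) / 2.
Proof.
  unfold std_normal_pdf. pose proof s2pi. pose proof (exp_pos (- (x^2)/2)).
  unfold Rdiv. apply Rmult_le_compat_l; [lra|]. apply Rinv_le_contravar; lra.
Qed.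

Lemma exp_le1 x : x <= 0 -> exp x <= 1.
Proof. intros H. rewrite <- exp_0. destruct (Req_dec x 0). subst; lra. left; apply exp_increasing; lra. Qed.

Lemma phi_le x : phi x <= 1/2.
Proof. pose proof (phi_le_exp x). pose proof (exp_le1 (- (x^2)/2)). nra. Qed.

Lemma exp_le x y : x <= y -> exp x <= exp y.
Proof. intros H. destruct (Req_dec x y). subst; lra. left; apply exp_increasing; lra. Qed.

Lemma phi_bm x : phi x <= exp (1 * x + 1/2).
Proof.
  pose proof (phi_le_exp x). pose proof (exp_le (- (x^2)/2) (1*x+1/2)).
  pose proof (exp_pos (- (x^2)/2)). assert (- (x^2)/2 <= 1*x+1/2) by (pose proof (pow2_ge_0 (x+1)); simpl in *; nra). lra.
Qed.
Lemma phi_bp x : phi x <= exp (-1 * x + 1/2).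
Proof.
  pose proof (phi_le_exp x). pose proof (exp_le (- (x^2)/2) (-1*x+1/2)).
  pose proof (exp_pos (- (x^2)/2)). assert (- (x^2)/2 <= -1*x+1/2) by (pose proof (pow2_ge_0 (x-1)); simpl in *; nra). lra.
Qed.

Lemma phi_deriv x : is_derive phi x (- x * phi x).
Proof. unfold std_normal_pdf. auto_derive; auto. replace (- (x * (x * 1)) * / 2) with (- x ^ 2 / 2) by (simpl; field). field. pose proof s2pi; lra. Qed.

Lemma phi_cont : cont phi.
Proof. apply der_cont. intros x; eexists; apply phi_deriv. Qed.

Lemma phi_sym x : phi (- x) = phi x.
Proof. unfold std_normal_pdf. replace ((-x)^2) with (x^2) by ring. reflexivity. Qed.

Lemma phi_eq a b : phi a = phi b * exp ((b^2 - a^2)/2).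
Proof.
  unfold std_normal_pdf. unfold Rdiv. rewrite Rmult_assoc, (Rmult_comm (/ _)), <- Rmult_assoc, <- exp_plus.
  f_equal. f_equal. field.
Qed.

Lemma phi_mono_neg u v : u <= v <= 0 -> phi u <= phi v.
Proof.
  intros H. rewrite (phi_eq u v). pose proof (phi_pos v).
  assert (exp ((v^2 - u^2)/2) <= 1). apply exp_le1. nra. nra.
Qed.
Lemma phi_mono_pos u v : 0 <= u <= v -> phi v <= phi u.
Proof.
  intros H. rewrite (phi_eq v u). pose proof (phi_pos u).
  assert (exp ((u^2 - v^2)/2) <= 1). apply exp_le1. nra. nra.
Qed.

Lemma cont_exp_lin c d : cont (fun x => exp (c * x + d)).
Proof. apply der_cont. intros x; exists (c * exp (c*x+d)). auto_derive; auto. ring. Qed.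

Lemma RInt_exp_lin c d a b : c <> 0 -> RInt (fun x => exp (c * x + d)) a b = (exp (c*b+d) - exp (c*a+d)) / c.
Proof.
  intros Hc. rewrite (RInt_der (fun x => exp (c*x+d)/c)). change (exp (c*b+d)/c - exp (c*a+d)/c = (exp (c*b+d) - exp (c*a+d))/c). field; auto.
  - intros x. auto_derive; auto. field; auto.
  - apply cont_exp_lin.
Qed.



Lemma Phi_IL x : ILm phi x (Phi x).
Proof.
  assert (H : exists l, ILm phi x l).
  { apply ILm_exists with (exp (1*x + 1/2)). apply phi_cont.
    intros; left; apply phi_pos.
    intros a Ha. apply Rle_trans with (RInt (fun u => exp (1*u+1/2)) a x).
    apply RInt_le; auto; try apply exRI; try apply phi_cont; try apply cont_exp_lin.
    intros; apply phi_bm.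
    rewrite RInt_exp_lin by lra. pose proof (exp_pos (1*a+1/2)). lra. }
  destruct H as [l Hl].
  replace (Phi x) with l; auto. symmetry. unfold std_normal_cdf.
  apply is_RInt_gen_unique. apply ILm_gen; auto. apply phi_cont.
Qed.

Lemma Phi_bound x : Phi x <= exp (1 * x + 1/2).
Proof.
  apply (lim_le_m _ _ _ (Phi_IL x)). exists x. intros a Ha.
  apply Rle_trans with (RInt (fun u => exp (1*u+1/2)) a x).
  apply RInt_le; try lra; try apply exRI; try apply phi_cont; try apply cont_exp_lin.
  intros; apply phi_bm.
  rewrite RInt_exp_lin by lra. pose proof (exp_pos (1*a+1/2)). lra.
Qed.

Lemma Phi_ch b c : Phi c = Phi b + RInt phi b c.
Proof.
  apply (ILm_unique phi c). apply Phi_IL. apply ILm_chasles. apply phi_cont. apply Phi_IL.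
Qed.

Lemma Phi_deriv x : is_derive Phi x (phi x).
Proof.
  apply is_derive_ext with (fun y => Phi 0 + RInt phi 0 y).
  { intros y. symmetry. apply Phi_ch. }
  replace (phi x) with (plus zero (phi x)) by (unfold plus, zero; simpl; ring).
  apply (@is_derive_plus R_AbsRing R_NormedModule (fun _ => Phi 0) (RInt phi 0)). apply (@is_derive_const R_AbsRing R_NormedModule).
  apply (@is_derive_RInt R_NormedModule phi (RInt phi 0) 0). apply filter_forall. intros; apply RIc, phi_cont.
  apply phi_cont.
Qed.

Lemma Phi_cont : cont Phi.
Proof. apply der_cont. intros x; eexists; apply Phi_deriv. Qed.

Lemma Phi_pos x : 0 < Phi x.
Proof.
  apply (ILm_pos phi x (Phi x) phi_cont) with (x - 1).
  intros; left; apply phi_pos. apply Phi_IL. lra. intros; apply phi_pos.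
Qed.

Lemma Phi_incr a b : a < b -> Phi a < Phi b.
Proof.
  intros H. rewrite (Phi_ch a b). pose proof (RInt_pos phi a b phi_cont H (fun x _ => phi_pos x)). lra.
Qed.
Lemma Phi_le a b : a <= b -> Phi a <= Phi b.
Proof. intros [H|H]. left; apply Phi_incr; auto. subst; lra. Qed.

Lemma Phi_lip a b : a <= b -> Phi b - Phi a <= (b - a) / 2.
Proof.
  intros H. rewrite (Phi_ch a b).
  assert (RInt phi a b <= RInt (fun _ => 1/2) a b).
  { apply RInt_le; auto; try apply exRI; try apply phi_cont; try apply cont_const. intros; apply phi_le. }
  rewrite RInt_const in H0. unfold scal in H0; simpl in H0; unfold mult in H0; simpl in H0. lra.
Qed.

Lemma Phi_lim_m : is_lim Phi m_infty 0.
Proof.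
  apply squeeze_m with (fun x => exp (1*x+1/2)).
  intros x; split; [left; apply Phi_pos| apply Phi_bound].
  apply lim_exp_lin_m; lra.
Qed.

Lemma phi_lim_m : is_lim phi m_infty 0.
Proof.
  apply squeeze_m with (fun x => exp (1*x+1/2)).
  intros x; split; [left; apply phi_pos| apply phi_bm].
  apply lim_exp_lin_m; lra.
Qed.


Lemma Phi_neq x : Phi x <> 0.
Proof. pose proof (Phi_pos x); lra. Qed.
Lemma phi_neq x : phi x <> 0.
Proof. pose proof (phi_pos x); lra. Qed.

Lemma mills x : x < 0 -> Phi x < phi x / (- x).
Proof.
  intros Hx.
  set (g := fun u => (u / x - 1) * phi u).
  assert (Hgc : cont g). { unfold g. apply cont_mult. apply der_cont. intros u; eexists. auto_derive; auto. apply phi_cont. }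
  assert (Hhc : cont (fun u => u * phi u)). { apply cont_mult. apply der_cont. intros u; eexists. apply (@is_derive_id R_AbsRing). apply phi_cont. }
  set (Gam := RInt g (x - 1) x).
  assert (HG : 0 < Gam).
  { apply RInt_pos; auto. lra. intros u Hu. unfold g. apply Rmult_lt_0_compat; [|apply phi_pos].
    replace (u / x - 1) with ((x - u) / (- x)) by (field; lra). apply Rdiv_lt_0_compat; lra. }
  assert (Hb : forall a, a <= x - 1 -> RInt phi a x <= (1/x) * phi a + (- phi x / x - Gam)).
  { intros a Ha.
    assert (E1 : RInt (fun u => u * phi u) a x = - phi x - - phi a).
    { rewrite (RInt_der (fun u => - phi u)); auto. intros u.
      eapply deq. apply dopp. apply phi_deriv. ring. }
    assert (E2 : RInt phi a x = RInt (fun u => (1/x) * (u * phi u) - g u) a x).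
    { apply RInt_ext. intros u _. unfold g. rr. field. lra. }
    rewrite E2, RInt_minusR, RInt_scalR, E1; auto.
    2: { apply cont_mult; auto. apply cont_const. }
    assert (Gam <= RInt g a x).
    { rewrite <- (RInt_Ch g a (x-1) x Hgc). unfold Gam.
      assert (0 <= RInt g a (x - 1)).
      { apply RInt_ge0; auto. intros u Hu. unfold g. apply Rmult_le_pos; [|left; apply phi_pos].
        replace (u / x - 1) with ((x - u) / (- x)) by (field; lra). apply Rmult_le_pos; [lra|].
        left; apply Rinv_0_lt_compat; lra. }
      lra. }
    unfold Rdiv in *. nra. }
  assert (Hle : Rbar_le (Phi x) ((1/x) * 0 + (- phi x / x - Gam))).
  { apply (is_lim_le_loc (fun a => RInt phi a x) (fun a => (1/x) * phi a + (- phi x / x - Gam)) m_infty).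
    - exists (x - 1). intros; apply Hb; lra.
    - apply Phi_IL.
    - apply is_lim_plus'. apply (is_lim_scal_l phi (1/x) m_infty 0). apply phi_lim_m. apply is_lim_const. }
  simpl in Hle. replace (phi x / - x) with (- phi x / x) by (field; lra). lra.
Qed.

Definition Rm x := Phi x / phi x.

Lemma Rm_pos x : 0 < Rm x.
Proof. unfold Rm. apply Rdiv_lt_0_compat; [apply Phi_pos|apply phi_pos]. Qed.

Lemma Rm_deriv x : is_derive Rm x (1 + x * Rm x).
Proof.
  unfold Rm. eapply is_derive_ext. { intros t; reflexivity. }
  replace (1 + x * (Phi x / phi x)) with ((phi x * phi x - Phi x * (- x * phi x)) / phi x ^ 2).
  apply is_derive_div. apply Phi_deriv. apply phi_deriv. apply phi_neq.
  field. apply phi_neq.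
Qed.

Lemma Rm_dpos x : 0 < 1 + x * Rm x.
Proof.
  destruct (Rle_lt_dec 0 x).
  - pose proof (Rm_pos x). nra.
  - pose proof (mills x r). unfold Rm. pose proof (phi_pos x).
    assert (Phi x / phi x < 1 / - x).
    { apply Rmult_lt_reg_r with (phi x); auto. unfold Rdiv. rewrite Rmult_assoc, Rinv_l by lra.
      replace (1 * / - x * phi x) with (phi x / - x) by (unfold Rdiv; ring). lra. }
    assert (x * (1 / - x) = -1) by (field; lra).
    assert (x * (Phi x / phi x) > x * (1 / - x)). apply Rmult_lt_gt_compat_neg_l; auto. lra.
Qed.

Lemma Rm_incr a b : a < b -> Rm a < Rm b.
Proof.
  intros H. apply (incr_function Rm m_infty p_infty (fun x => 1 + x * Rm x)); simpl; auto.
  intros; apply Rm_deriv. intros; apply Rm_dpos.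
Qed.

Definition rho x := x + phi x / Phi x.

Lemma rho_pos x : 0 < rho x.
Proof.
  unfold rho. pose proof (Rm_dpos x). pose proof (Rm_pos x). unfold Rm in *.
  replace (x + phi x / Phi x) with ((1 + x * (Phi x / phi x)) / (Phi x / phi x)).
  apply Rdiv_lt_0_compat; auto. field. split; try apply phi_neq; apply Phi_neq.
Qed.

Lemma rho_deriv x : is_derive rho x (1 - x * (phi x / Phi x) - (phi x / Phi x)^2).
Proof.
  unfold rho.
  replace (1 - x * (phi x / Phi x) - (phi x / Phi x)^2) with
    (plus one ((- x * phi x * Phi x - phi x * phi x) / Phi x ^ 2)).
  2:{ unfold plus, one; simpl. field. apply Phi_neq. }
  apply dplus. apply did.
  apply is_derive_div. apply phi_deriv. apply Phi_deriv. apply Phi_neq.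
Qed.

Lemma xphi_lim_m : is_lim (fun z => z * phi z) m_infty 0.
Proof.
  apply is_lim_le_le_loc with (fun z => exp (1/2) * (z * exp z)) (fun _ => 0).
  - simpl. exists 0. intros z Hz. split.
    + pose proof (phi_bm z). rewrite exp_plus in H. 
      replace (1 * z) with z in H by ring. nra.
    + pose proof (phi_pos z). nra.
  - replace (Finite 0) with (Rbar_mult (exp (1/2)) 0) by (simpl; f_equal; ring).
    apply (is_lim_scal_l (fun z => z * exp z) (exp (1/2)) m_infty 0). apply is_lim_mul_exp_m.
  - apply is_lim_const.
Qed.

Lemma J_pos x : 0 < 1 - x * (phi x / Phi x) - (phi x / Phi x)^2.
Proof.
  set (m := phi x / Phi x).
  set (G := fun z => Phi z - z * phi z - 2 * m * phi z + m^2 * Phi z).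
  set (g := fun z => (z + m)^2 * phi z).
  assert (Hgc : cont g). { unfold g. apply cont_mult; [|apply phi_cont]. apply der_cont. intros u; eexists. auto_derive; auto. }
  assert (HD : forall z, is_derive G z (g z)).
  { intros z. unfold G, g.
    eapply deq.
    apply dplus. apply dminus. apply dminus. apply Phi_deriv.
    apply (dmult (fun z => z) phi). apply did. apply phi_deriv.
    apply dscal. apply phi_deriv. apply dscal. apply Phi_deriv. ring. }
  assert (HL : is_lim G m_infty 0).
  { unfold G. replace (Finite 0) with (Finite (0 - 0 - 2 * m * 0 + m^2 * 0)) by (f_equal; ring).
    apply is_lim_plus'. apply is_lim_minus'. apply is_lim_minus'. apply Phi_lim_m. apply xphi_lim_m.
    apply (is_lim_scal_l phi (2*m) m_infty 0). apply phi_lim_m.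
    apply (is_lim_scal_l Phi (m^2) m_infty 0). apply Phi_lim_m. }
  pose proof (ILm_deriv g G 0 x Hgc HD HL) as HI.
  assert (Hp : 0 < G x - 0).
  { apply (ILm_pos g x _ Hgc) with (x - rho x); auto.
    - intros; unfold g. apply Rmult_le_pos. apply pow2_ge_0. left; apply phi_pos.
    - pose proof (rho_pos x); lra.
    - intros z Hz. unfold g. apply Rmult_lt_0_compat; [|apply phi_pos].
      unfold rho in Hz. fold m in Hz. apply pow_lt. lra. }
  unfold G in Hp. unfold m in *. pose proof (Phi_pos x).
  replace (1 - x * (phi x / Phi x) - (phi x / Phi x) ^ 2) with
    ((Phi x - x * phi x - 2 * (phi x / Phi x) * phi x + (phi x / Phi x) ^ 2 * Phi x - 0) / Phi x).
  apply Rdiv_lt_0_compat; auto. field. lra.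
Qed.

Lemma rho_incr a b : a < b -> rho a < rho b.
Proof.
  intros H. apply (incr_function rho m_infty p_infty (fun x => 1 - x * (phi x / Phi x) - (phi x / Phi x)^2)); simpl; auto.
  intros; apply rho_deriv. intros; apply J_pos.
Qed.


Section K.
Variables (sigma t : R).
Hypothesis Hs : 0 < sigma.

Definition kk y := post_kernel sigma t y.

Lemma kk_eq y s : kk y s = phi ((s - y) / sigma) / Phi ((s - t) / sigma).
Proof. reflexivity. Qed.

Lemma kk_pos y s : 0 < kk y s.
Proof. rewrite kk_eq. apply Rdiv_lt_0_compat; [apply phi_pos|apply Phi_pos]. Qed.

Lemma kk_deriv y s : is_derive (kk y) s
  ((- ((s - y)/sigma) * phi ((s-y)/sigma) / sigma * Phi ((s-t)/sigma) - phi ((s-y)/sigma) * (phi ((s-t)/sigma) / sigma)) / Phi ((s-t)/sigma) ^ 2).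
Proof.
  unfold kk, post_kernel, sel_prob.
  apply (ddiv (fun th => phi ((th - y)/sigma)) (fun th => Phi ((th - t)/sigma))).
  apply daff. lra. apply phi_deriv. apply daff. lra. apply Phi_deriv. apply Phi_neq.
Qed.

Lemma kk_cont y : cont (kk y).
Proof. apply der_cont. intros s; eexists; apply kk_deriv. Qed.

Lemma kk_ILm_t y : t < y -> exists l, ILm (kk y) t l.
Proof.
  intros Hty. set (dl := (y - t) / sigma).
  assert (Hdl : 0 < dl) by (unfold dl; apply Rdiv_lt_0_compat; lra).
  set (c1 := dl / (2 * sigma)). set (d1 := dl^2/8 - dl * y / (2 * sigma)).
  assert (Hc1 : 0 < c1) by (unfold c1; apply Rdiv_lt_0_compat; lra).
  assert (Hb : forall s, s <= t -> kk y s <= (2 / dl) * exp (c1 * s + d1)).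
  { intros s Hst. rewrite kk_eq.
    set (a := (s - y)/sigma). set (b := (s - t)/sigma).
    assert (Hba : b = a + dl) by (unfold a, b, dl; field; lra).
    assert (Hb0 : b <= 0) by (unfold b; apply Rmult_le_0_r; [lra| left; apply Rinv_0_lt_compat; lra]).
    assert (HP : (dl/2) * phi (a + dl/2) <= Phi b).
    { rewrite (Phi_ch (b - dl/2) b).
      assert (RInt (fun _ => phi (a + dl/2)) (b - dl/2) b <= RInt phi (b - dl/2) b).
      { apply RInt_le; try lra; try apply exRI; try apply cont_const; try apply phi_cont.
        intros u Hu. apply phi_mono_neg. lra. }
      rewrite RInt_const in H. unfold scal in H; simpl in H; unfold mult in H; simpl in H.
      pose proof (Phi_pos (b - dl/2)).
      replace (b - (b - dl/2)) with (dl/2) in H by ring. lra. }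
    pose proof (phi_pos (a + dl/2)). pose proof (Phi_pos b).
    rewrite (phi_eq a (a + dl/2)).
    replace (c1 * s + d1) with (((a + dl/2)^2 - a^2)/2).
    2:{ unfold c1, d1, a. field. lra. }
    pose proof (exp_pos (((a + dl / 2) ^ 2 - a ^ 2) / 2)).
    apply Rle_trans with (phi (a + dl / 2) * exp (((a + dl / 2) ^ 2 - a ^ 2) / 2) / ((dl/2) * phi (a + dl/2))).
    - unfold Rdiv. apply Rmult_le_compat_l. nra. apply Rinv_le_contravar; nra.
    - right. field. lra. }
  apply ILm_exists with ((2/dl) * (exp (c1 * t + d1) / c1)).
  apply kk_cont. intros; left; apply kk_pos.
  intros a Ha. apply Rle_trans with (RInt (fun s => (2/dl) * exp (c1 * s + d1)) a t).
  apply RInt_le; auto; try apply exRI; try apply kk_cont.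
  apply cont_mult. apply cont_const. apply cont_exp_lin.
  intros; apply Hb; lra.
  rewrite RInt_scalR by apply cont_exp_lin. rewrite RInt_exp_lin by lra.
  apply Rmult_le_compat_l. left; apply Rdiv_lt_0_compat; lra.
  unfold Rdiv. apply Rmult_le_compat_r. left; apply Rinv_0_lt_compat; auto.
  pose proof (exp_pos (c1 * a + d1)); lra.
Qed.

Lemma kk_ILp_t y : exists l, ILp (kk y) t l.
Proof.
  set (c2 := -1 / sigma). set (d2 := y / sigma + 1/2).
  assert (Hc2 : c2 < 0) by (assert (0 < /sigma) by (apply Rinv_0_lt_compat; lra); unfold c2, Rdiv; lra).
  pose proof (Phi_pos 0) as HP0.
  assert (Hb : forall s, t <= s -> kk y s <= (/ Phi 0) * exp (c2 * s + d2)).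
  { intros s Hst. rewrite kk_eq.
    assert (Phi 0 <= Phi ((s - t)/sigma)).
    { apply Phi_le. apply Rmult_le_pos; [lra| left; apply Rinv_0_lt_compat; lra]. }
    pose proof (phi_bp ((s - y)/sigma)).
    replace (-1 * ((s - y) / sigma) + 1/2) with (c2 * s + d2) in H0 by (unfold c2, d2; field; lra).
    pose proof (phi_pos ((s - y)/sigma)).
    unfold Rdiv at 1. rewrite Rmult_comm. apply Rmult_le_compat; auto.
    left; apply Rinv_0_lt_compat, Phi_pos. left; apply phi_pos.
    apply Rinv_le_contravar; auto. }
  apply ILp_exists with ((/ Phi 0) * (- exp (c2 * t + d2) / c2)).
  apply kk_cont. intros; left; apply kk_pos.
  intros b Hb'. apply Rle_trans with (RInt (fun s => (/ Phi 0) * exp (c2 * s + d2)) t b).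
  apply RInt_le; auto; try apply exRI; try apply kk_cont.
  apply cont_mult. apply cont_const. apply cont_exp_lin.
  intros; apply Hb; lra.
  rewrite RInt_scalR by apply cont_exp_lin. rewrite RInt_exp_lin by lra.
  apply Rmult_le_compat_l. left; apply Rinv_0_lt_compat; lra.
  unfold Rdiv. assert (/c2 < 0) by (apply Rinv_lt_0_compat; auto).
  pose proof (exp_pos (c2 * b + d2)); nra.
Qed.

Definition Nv y th : R := RInt_gen (kk y) (Rbar_locally m_infty) (at_point th).
Definition Dv y : R := RInt_gen (kk y) (Rbar_locally m_infty) (Rbar_locally p_infty).

Lemma post_eq y th : sel_post_cdf sigma t y th = Nv y th / Dv y.
Proof. reflexivity. Qed.

Lemma kern_struct y : t < y -> forall th,
  ILm (kk y) th (Nv y th) /\ ILp (kk y) th (Dv y - Nv y th) /\ 0 < Nv y th /\ 0 < Dv y - Nv y th.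
Proof.
  intros Hty th.
  destruct (kk_ILm_t y Hty) as [l0 H0]. destruct (kk_ILp_t y) as [l1 H1].
  pose proof (kk_cont y) as Hc.
  assert (EN : Nv y th = l0 + RInt (kk y) t th).
  { unfold Nv. apply is_RInt_gen_unique. apply ILm_gen; auto. apply ILm_chasles; auto. }
  assert (ED : Dv y = l0 + l1).
  { unfold Dv. apply is_RInt_gen_unique.
    apply (is_RInt_gen_Chasles (kk y) t l0 l1); apply ILm_gen || apply ILp_gen; auto. }
  assert (ES : RInt (kk y) th t = - RInt (kk y) t th).
  { pose proof (RInt_Ch (kk y) th t th Hc). rewrite RInt_point in H. unfold zero in H; simpl in H. lra. }
  assert (HN : ILm (kk y) th (Nv y th)). { rewrite EN. apply ILm_chasles; auto. }
  assert (HM : ILp (kk y) th (Dv y - Nv y th)).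
  { replace (Dv y - Nv y th) with (RInt (kk y) th t + l1) by (rewrite ED, EN, ES; ring).
    apply ILp_chasles; auto. }
  repeat split; auto.
  - apply (ILm_pos (kk y) th _ Hc) with (th - 1); auto. intros; left; apply kk_pos. lra. intros; apply kk_pos.
  - apply (ILp_pos (kk y) th _ Hc) with (th + 1); auto. intros; left; apply kk_pos. lra. intros; apply kk_pos.
Qed.

Lemma Dv_pos y : t < y -> 0 < Dv y.
Proof. intros H. destruct (kern_struct y H 0) as [_ [_ [H1 H2]]]. lra. Qed.

Lemma Pi_incr y th1 th2 : t < y -> th1 < th2 -> sel_post_cdf sigma t y th1 < sel_post_cdf sigma t y th2.
Proof.
  intros Hty Hth. rewrite !post_eq.
  destruct (kern_struct y Hty th1) as [H1 _]. destruct (kern_struct y Hty th2) as [H2 _].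
  assert (E : Nv y th2 = Nv y th1 + RInt (kk y) th1 th2).
  { apply (ILm_unique (kk y) th2); auto. apply ILm_chasles; auto. apply kk_cont. }
  pose proof (RInt_pos (kk y) th1 th2 (kk_cont y) Hth (fun x _ => kk_pos y x)).
  pose proof (Dv_pos y Hty).
  unfold Rdiv. apply Rmult_lt_compat_r. apply Rinv_0_lt_compat; auto. lra.
Qed.

End K.


Lemma tilt p h th A B Ah Bh : cont p -> cont h -> (forall x, 0 < p x) ->
  (forall x z, x < z -> h x < h z) ->
  ILm p th A -> ILp p th B -> ILm (fun x => p x * h x) th Ah -> ILp (fun x => p x * h x) th Bh ->
  0 < Ah + Bh -> Ah / (Ah + Bh) < A / (A + B).
Proof.
  intros Hpc Hhc Hp Hh HA HB HAh HBh Hs.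
  assert (A0 : 0 < A).
  { apply (ILm_pos p th A Hpc) with (th - 1); auto. intros; left; auto. lra. }
  assert (B0 : 0 < B).
  { apply (ILp_pos p th B Hpc) with (th + 1); auto. intros; left; auto. lra. }
  assert (Hph : cont (fun x => p x * h x)) by (apply cont_mult; auto).
  assert (Hl : 0 < h th * A - Ah).
  { assert (Hf : cont (fun x => h th * p x - p x * h x)).
    { apply cont_minus; auto. intros x; apply (continuous_scal_r (h th) p); auto. }
    apply (ILm_pos (fun x => h th * p x - p x * h x) th _ Hf) with (th - 1).
    - intros x Hx. destruct Hx as [Hx|Hx]. pose proof (Hh _ _ Hx). pose proof (Hp x). nra. subst; nra.
    - apply ILm_minus; auto. intros x; apply (continuous_scal_r (h th) p); auto. apply ILm_scal; auto.
    - lra.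
    - intros x Hx. pose proof (Hh x th ltac:(lra)). pose proof (Hp x). nra. }
  assert (Hr : 0 < Bh - h th * B).
  { assert (Hf : cont (fun x => p x * h x - h th * p x)).
    { apply cont_minus; auto. intros x; apply (continuous_scal_r (h th) p); auto. }
    apply (ILp_pos (fun x => p x * h x - h th * p x) th _ Hf) with (th + 1).
    - intros x Hx. destruct Hx as [Hx|Hx]. pose proof (Hh _ _ Hx). pose proof (Hp x). nra. subst; nra.
    - apply ILp_minus; auto. intros x; apply (continuous_scal_r (h th) p); auto. apply ILp_scal; auto.
    - lra.
    - intros x Hx. pose proof (Hh th x ltac:(lra)). pose proof (Hp x). nra. }
  assert (Ah * B < A * Bh) by nra.
  apply Rminus_gt_0_lt.
  replace (A / (A + B) - Ah / (Ah + Bh)) with ((A * Bh - Ah * B) / ((A + B) * (Ah + Bh))) by (field; lra).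
  apply Rdiv_lt_0_compat; nra.
Qed.

Section F.
Variables (sigma t : R).
Hypothesis Hs : 0 < sigma.

Lemma Pi_decr_y y1 y2 th : t < y1 -> y1 < y2 ->
  sel_post_cdf sigma t y2 th < sel_post_cdf sigma t y1 th.
Proof.
  intros H1 H12. rewrite !post_eq.
  set (c := (y2 - y1) / sigma^2). set (d := - (y2^2 - y1^2) / (2 * sigma^2)).
  set (E := fun s => exp (c * s + d)).
  assert (HE : forall s, kk sigma t y2 s = kk sigma t y1 s * E s).
  { intros s. rewrite !kk_eq. rewrite (phi_eq ((s - y2)/sigma) ((s - y1)/sigma)). unfold E.
    replace ((((s - y1) / sigma) ^ 2 - ((s - y2) / sigma) ^ 2) / 2) with (c * s + d).
    field. apply Phi_neq. unfold c, d. field. lra. }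
  destruct (kern_struct sigma t Hs y1 ltac:(lra) th) as [A1 [B1 _]].
  destruct (kern_struct sigma t Hs y2 ltac:(lra) th) as [A2 [B2 _]].
  pose proof (Dv_pos sigma t Hs y2 ltac:(lra)).
  replace (Dv sigma t y2) with (Nv sigma t y2 th + (Dv sigma t y2 - Nv sigma t y2 th)) by ring.
  replace (Dv sigma t y1) with (Nv sigma t y1 th + (Dv sigma t y1 - Nv sigma t y1 th)) by ring.
  apply tilt with (kk sigma t y1) E th; auto.
  - apply kk_cont; auto.
  - apply cont_exp_lin.
  - apply kk_pos; auto.
  - intros x z Hxz. unfold E. apply exp_increasing.
    assert (0 < c). { unfold c. apply Rdiv_lt_0_compat. lra. apply pow_lt; lra. } nra.
  - apply ILm_ext with (kk sigma t y2); auto.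
  - apply ILp_ext with (kk sigma t y2); auto.
  - lra.
Qed.

Definition Cf y th := Phi ((th - y) / sigma) / Phi ((th - t) / sigma).

Lemma rho_Rm x : rho x * Rm x = 1 + x * Rm x.
Proof. unfold rho, Rm. field. split; [apply phi_neq|apply Phi_neq]. Qed.

Lemma RInt_phi_pos a b : 0 <= a <= b -> RInt phi a b <= (b - a) * phi a.
Proof.
  intros H. apply Rle_trans with (RInt (fun _ => phi a) a b).
  apply RInt_le; try lra; try apply exRI; try apply phi_cont; try apply cont_const.
  intros; apply phi_mono_pos; lra.
  rewrite RInt_const. unfold scal; simpl; unfold mult; simpl. lra.
Qed.

Lemma C_lt_Pi y th : t < y -> Cf y th < sel_post_cdf sigma t y th.
Proof.
  intros Hty. rewrite post_eq.
  set (Q := fun s => Rm ((s - y)/sigma) / Rm ((s - t)/sigma)).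
  set (h := fun s => / sigma * (1 - Q s)).
  assert (Hsn : sigma <> 0) by lra.
  set (Qd := fun s => ((1 + (s - y)/sigma * Rm ((s - y)/sigma)) / sigma * Rm ((s - t)/sigma) -
       Rm ((s - y)/sigma) * ((1 + (s - t)/sigma * Rm ((s - t)/sigma)) / sigma)) / Rm ((s - t)/sigma) ^ 2).
  assert (HQd : forall s, is_derive Q s (Qd s)).
  { intros s. unfold Q, Qd. apply (ddiv (fun s => Rm ((s - y)/sigma)) (fun s => Rm ((s - t)/sigma))).
    apply daff; auto. apply Rm_deriv. apply daff; auto. apply Rm_deriv.
    pose proof (Rm_pos ((s - t)/sigma)); lra. }
  assert (Hhd1 : forall s, is_derive h s (/ sigma * (0 - Qd s))).
  { intros s. unfold h. apply dscal. apply dminus. apply dconst. apply HQd. }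
  assert (Hhd2 : forall s, 0 < / sigma * (0 - Qd s)).
  { intros s. unfold Qd.
    set (a := (s - y)/sigma). set (b := (s - t)/sigma).
    assert (Hab : a < b). { unfold a, b. unfold Rdiv. apply Rmult_lt_compat_r. apply Rinv_0_lt_compat; lra. lra. }
    pose proof (rho_incr a b Hab). pose proof (Rm_pos a). pose proof (Rm_pos b).
    rewrite <- !rho_Rm.
    replace ((rho a * Rm a / sigma * Rm b - Rm a * (rho b * Rm b / sigma)) / Rm b ^ 2)
      with ((rho a - rho b) * Rm a / (sigma * Rm b)) by (field; lra).
    assert (0 < Rm a / (sigma * Rm b)) by (apply Rdiv_lt_0_compat; nra).
    assert (0 < / sigma) by (apply Rinv_0_lt_compat; lra).
    assert (0 < (rho b - rho a) * (Rm a * / (sigma * Rm b))) by (unfold Rdiv in *; apply Rmult_lt_0_compat; lra).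
    unfold Rdiv in *. apply Rmult_lt_0_compat; auto. lra. }
  assert (Hhc : cont h). { apply der_cont. intros s. eexists. apply Hhd1. }
  assert (Hhi : forall x z, x < z -> h x < h z).
  { intros x z Hxz. apply (incr_function h m_infty p_infty (fun s => / sigma * (0 - Qd s))); try (intros; apply Hhd1); try (intros; apply Hhd2); simpl; auto. }
  assert (HCd : forall s, is_derive (Cf y) s (kk sigma t y s * h s)).
  { intros s. unfold Cf.
    eapply deq. apply (ddiv (fun s => Phi ((s - y)/sigma)) (fun s => Phi ((s - t)/sigma))).
    apply daff; auto. apply Phi_deriv. apply daff; auto. apply Phi_deriv. apply Phi_neq.
    rewrite kk_eq. unfold h, Q, Rm. field.
    repeat split; try apply phi_neq; try apply Phi_neq; auto. }
  assert (Hkc : cont (fun s => kk sigma t y s * h s)). { apply cont_mult; auto. apply kk_cont; auto. }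
  assert (HLm : is_lim (Cf y) m_infty 0).
  { set (c := (y - t) / sigma^2). set (d := - (y^2 - t^2) / (2 * sigma^2)).
    apply squeeze_m with (fun s => exp (c * s + d)).
    - intros s. unfold Cf. set (a := (s - y)/sigma). set (b := (s - t)/sigma).
      pose proof (Phi_pos a). pose proof (Phi_pos b). split. left; apply Rdiv_lt_0_compat; auto.
      assert (Hab : a < b). { unfold a, b. unfold Rdiv. apply Rmult_lt_compat_r. apply Rinv_0_lt_compat; lra. lra. }
      pose proof (Rm_incr a b Hab). unfold Rm in H1.
      pose proof (phi_pos a). pose proof (phi_pos b).
      replace (c * s + d) with ((b^2 - a^2)/2) by (unfold a, b, c, d; field; lra).
      replace (exp ((b ^ 2 - a ^ 2) / 2)) with (phi a / phi b) by (rewrite (phi_eq a b); field; lra).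
      apply Rmult_le_reg_r with (Phi b * phi b / phi a). apply Rdiv_lt_0_compat; nra.
      replace (Phi a / Phi b * (Phi b * phi b / phi a)) with (Phi a / phi a * phi b) by (field; lra).
      replace (phi a / phi b * (Phi b * phi b / phi a)) with (Phi b / phi b * phi b) by (field; lra).
      apply Rmult_le_compat_r; lra.
    - apply lim_exp_lin_m. unfold c. apply Rdiv_lt_0_compat. lra. apply pow_lt; lra. }
  assert (HLp : is_lim (Cf y) p_infty 1).
  { set (dl := (y - t)/sigma).
    assert (Hz : is_lim (fun s => 1 - Cf y s) p_infty 0).
    { apply is_lim_le_le_loc with (fun _ => 0) (fun s => (dl / Phi 0) * exp ((-1/sigma) * s + (y / sigma + 1/2))).
      - simpl. exists y. intros s Hsy. unfold Cf.
        set (a := (s - y)/sigma). set (b := (s - t)/sigma).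
        assert (Ha0 : 0 <= a) by (unfold a; apply Rmult_le_pos; [lra|left; apply Rinv_0_lt_compat; lra]).
        assert (Hba : b = a + dl) by (unfold a, b, dl; field; lra).
        assert (Hdl : 0 < dl) by (unfold dl; apply Rdiv_lt_0_compat; lra).
        pose proof (Phi_pos b). pose proof (Phi_le 0 b ltac:(lra)). pose proof (Phi_pos 0).
        assert (HR : RInt phi a b <= dl * phi a) by (rewrite Hba; replace dl with (a + dl - a) at 2 by ring; apply RInt_phi_pos; lra).
        assert (HR0 : 0 <= RInt phi a b) by (apply RInt_ge0; try apply phi_cont; try lra; intros; left; apply phi_pos).
        replace (1 - Phi a / Phi b) with ((Phi b - Phi a) / Phi b) by (field; lra).
        replace (Phi b - Phi a) with (RInt phi a b) by (pose proof (Phi_ch a b); lra).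
        split. apply Rdiv_le_0_compat; lra.
        pose proof (phi_bp a). replace (-1 * a + 1/2) with (-1/sigma * s + (y/sigma + 1/2)) in H2 by (unfold a; field; lra).
        apply Rle_trans with (dl * phi a / Phi 0).
        unfold Rdiv. apply Rmult_le_compat; try lra. left; apply Rinv_0_lt_compat; lra.
        apply Rinv_le_contravar; lra.
        unfold Rdiv. rewrite (Rmult_comm dl (/ Phi 0)). rewrite (Rmult_comm (dl * phi a)). rewrite <- Rmult_assoc.
        apply Rmult_le_compat_l. left; apply Rmult_lt_0_compat; auto. apply Rinv_0_lt_compat; lra. lra.
      - apply is_lim_const.
      - replace (Finite 0) with (Rbar_mult (dl / Phi 0) 0) by (simpl; f_equal; ring).
        apply (is_lim_scal_l _ (dl / Phi 0) p_infty 0). apply lim_exp_lin_p.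
        assert (0 < /sigma) by (apply Rinv_0_lt_compat; lra). unfold Rdiv; lra. }
    apply is_lim_ext with (fun s => 1 - (1 - Cf y s)). intros; ring.
    replace (Finite 1) with (Finite (1 - 0)) by (f_equal; ring).
    apply is_lim_minus'. apply is_lim_const. auto. }
  pose proof (ILm_deriv _ _ _ th Hkc HCd HLm) as HAh.
  pose proof (ILp_deriv _ _ _ th Hkc HCd HLp) as HBh.
  destruct (kern_struct sigma t Hs y Hty th) as [A1 [B1 _]].
  replace (Dv sigma t y) with (Nv sigma t y th + (Dv sigma t y - Nv sigma t y th)) by ring.
  replace (Cf y th) with ((Cf y th - 0) / ((Cf y th - 0) + (1 - Cf y th))) by (field; lra).
  apply tilt with (kk sigma t y) h th; auto.
  apply kk_cont; auto. apply kk_pos; auto. lra.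
Qed.

End F.


Section G.
Variables (sigma t : R).
Hypothesis Hs : 0 < sigma.

Lemma kk_tilt y d s : kk sigma t (y + d) s =
  kk sigma t y s * exp (((y + d - y) / sigma^2) * s + (- ((y + d)^2 - y^2) / (2 * sigma^2))).
Proof.
  rewrite !kk_eq. rewrite (phi_eq ((s - (y + d))/sigma) ((s - y)/sigma)).
  replace ((((s - y) / sigma) ^ 2 - ((s - (y + d)) / sigma) ^ 2) / 2) with
    (((y + d - y) / sigma^2) * s + (- ((y + d)^2 - y^2) / (2 * sigma^2))) by (field; lra).
  field. apply Phi_neq.
Qed.

Lemma Dv_shift y d : t < y -> 0 < d -> Dv sigma t (y + d) <= Dv sigma t y.
Proof.
  intros Hty Hd.
  destruct (kern_struct sigma t Hs (y + d) ltac:(lra) t) as [A1 [B1 _]].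
  destruct (kern_struct sigma t Hs y Hty t) as [A0 [B0 _]].
  set (N' := Nv sigma t (y + d) t) in *. set (D' := Dv sigma t (y + d)) in *.
  set (N := Nv sigma t y t) in *. set (D := Dv sigma t y) in *.
  pose proof (kk_cont sigma t Hs (y + d)) as Hc'. pose proof (kk_cont sigma t Hs y) as Hc.
  assert (Hall : forall a b, a <= b -> RInt (kk sigma t (y + d)) a b <= D).
  { intros a b Hab.
    assert (E : RInt (kk sigma t (y + d)) a b = RInt (fun u => kk sigma t (y + d) (u + d)) (a - d) (b - d)).
    { pose proof (RInt_comp_lin (kk sigma t (y + d)) 1 d (a - d) (b - d)) as HH.
      replace (1 * (a - d) + d) with a in HH by ring. replace (1 * (b - d) + d) with b in HH by ring.
      rewrite <- HH. apply RInt_ext. intros x _. unfold scal; simpl; unfold mult; simpl. rr.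
      rewrite Rmult_1_l. f_equal. ring. apply exRI; auto. }
    rewrite E.
    apply Rle_trans with (RInt (kk sigma t y) (a - d) (b - d)).
    - assert (Hcs : cont (fun u => kk sigma t (y + d) (u + d))).
      { apply der_cont. intros x. eexists. apply (dcomp (kk sigma t (y+d)) (fun u => u + d)).
        apply kk_deriv; auto. apply (dplus (fun u => u) (fun _ => d)). apply did. apply dconst. }
      apply RInt_le; try lra; try apply exRI; auto.
      intros x _. rewrite !kk_eq.
      replace ((x + d - (y + d)) / sigma) with ((x - y)/sigma) by (field; lra).
      pose proof (phi_pos ((x - y)/sigma)).
      assert (Phi ((x - t)/sigma) <= Phi ((x + d - t)/sigma)).
      { apply Phi_le. unfold Rdiv. apply Rmult_le_compat_r. left; apply Rinv_0_lt_compat; lra. lra. }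
      pose proof (Phi_pos ((x - t)/sigma)).
      unfold Rdiv at 1 3. apply Rmult_le_compat_l. lra. apply Rinv_le_contravar; lra.
    - replace D with (N + (D - N)) by ring. apply total_bound with t; auto.
      intros; left; apply kk_pos; auto. lra. }
  assert (Ha : forall a, a < t -> RInt (kk sigma t (y + d)) a t + (D' - N') <= D).
  { intros a Ha. apply (lim_le_p (fun b => RInt (kk sigma t (y + d)) a t + RInt (kk sigma t (y + d)) t b)).
    apply is_lim_plus'. apply is_lim_const. exact B1.
    exists t. intros b Hb. rewrite (RInt_Ch _ a t b Hc'). apply Hall. lra. }
  assert (N' + (D' - N') <= D).
  { apply (lim_le_m (fun a => RInt (kk sigma t (y + d)) a t + (D' - N'))).
    apply is_lim_plus'. exact A1. apply is_lim_const.
    exists t. intros a Hat. apply Ha; auto. }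
  lra.
Qed.

Lemma ballR_inv (x y : R) (e : posreal) : ball x e y -> Rabs (y - x) < e.
Proof. intros H. exact H. Qed.

Lemma Pi_rsc y th al : t < y -> 0 < al -> al < sel_post_cdf sigma t y th ->
  exists y', y < y' /\ al < sel_post_cdf sigma t y' th.
Proof.
  intros Hty Hal Hb. rewrite post_eq in Hb.
  destruct (kern_struct sigma t Hs y Hty th) as [HN [_ [HN0 _]]].
  pose proof (Dv_pos sigma t Hs y Hty) as HD0.
  set (N := Nv sigma t y th) in *. set (D := Dv sigma t y) in *.
  set (be := N / D) in *.
  set (ga := (al + be) / 2).
  assert (HNbe : N = be * D) by (unfold be; field; lra).
  assert (Hga : al < ga < be) by (unfold ga; lra).
  assert (Ha0 : exists a0, a0 < th /\ ga * D < RInt (kk sigma t y) a0 th).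
  { assert (Hp : 0 < (be - ga) * D) by nra.
    pose proof HN as HN'. unfold ILm, is_lim in HN'.
    apply (proj1 (filterlim_locally _ _)) with (eps := mkposreal _ Hp) in HN'.
    simpl in HN'. destruct HN' as [M HM].
    exists (Rmin (M - 1) (th - 1)). split. pose proof (Rmin_r (M-1) (th-1)); lra.
    pose proof (HM (Rmin (M - 1) (th - 1)) ltac:(pose proof (Rmin_l (M-1) (th-1)); lra)) as HH.
    assert (HH2 : Rabs (RInt (kk sigma t y) (Rmin (M - 1) (th - 1)) th - N) < (be - ga) * D) by exact HH.
    apply Rabs_def2 in HH2. lra. }
  destruct Ha0 as [a0 [Ha0 HR]].
  set (r := al / ga).
  assert (Hr : 0 < r < 1).
  { unfold r. split. apply Rdiv_lt_0_compat; lra. apply Rmult_lt_reg_r with ga. lra.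
    unfold Rdiv. rewrite Rmult_assoc, Rinv_l by lra. lra. }
  set (K := Rabs (2 * a0 - 2 * y) + 1).
  assert (HK : 1 <= K) by (unfold K; pose proof (Rabs_pos (2*a0 - 2*y)); lra).
  set (d := Rmin 1 ((1 - r) * (2 * sigma^2) / K)).
  assert (Hd0 : 0 < d).
  { unfold d. apply Rmin_glb_lt. lra. apply Rdiv_lt_0_compat; [|lra]. apply Rmult_lt_0_compat. lra. nra. }
  assert (Hd1 : d <= 1) by apply Rmin_l.
  assert (Hd2 : d * K <= (1 - r) * (2 * sigma^2)).
  { pose proof (Rmin_r 1 ((1 - r) * (2 * sigma^2) / K)). fold d in H.
    apply Rmult_le_compat_r with (r := K) in H; [|lra].
    unfold Rdiv in H. rewrite Rmult_assoc, Rinv_l, Rmult_1_r in H by lra. exact H. }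
  set (E := fun s => exp (((y + d - y) / sigma^2) * s + (- ((y + d)^2 - y^2) / (2 * sigma^2)))).
  assert (HEa : r <= E a0).
  { unfold E. eapply Rle_trans; [|apply exp_ineq1_le].
    replace ((y + d - y) / sigma ^ 2 * a0 + - ((y + d) ^ 2 - y ^ 2) / (2 * sigma ^ 2)) with
      (d * (2 * a0 - 2 * y - d) / (2 * sigma^2)) by (field; lra).
    assert (- K <= 2 * a0 - 2 * y - d).
    { unfold K. pose proof (Rabs_pos (2*a0 - 2*y)). destruct (Rle_lt_dec 0 (2*a0-2*y)).
      rewrite Rabs_pos_eq in * by lra. lra. rewrite Rabs_left in * by lra. lra. }
    assert (d * (2 * a0 - 2 * y - d) >= - (1 - r) * (2 * sigma^2)) by nra.
    assert (0 < 2 * sigma^2) by nra.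
    assert (d * (2 * a0 - 2 * y - d) / (2 * sigma ^ 2) >= - (1 - r)).
    { apply Rle_ge. apply Rmult_le_reg_r with (2 * sigma^2); auto. unfold Rdiv.
      rewrite Rmult_assoc, Rinv_l, Rmult_1_r by lra. lra. }
    lra. }
  assert (HEinc : forall s, a0 <= s -> E a0 <= E s).
  { intros s Hs'. unfold E. apply exp_le.
    assert (0 <= (y + d - y) / sigma^2). { apply Rmult_le_pos. lra. left; apply Rinv_0_lt_compat; nra. } nra. }
  exists (y + d). split. lra.
  rewrite post_eq.
  destruct (kern_struct sigma t Hs (y + d) ltac:(lra) th) as [HN' [_ [HN0' _]]].
  pose proof (Dv_pos sigma t Hs (y + d) ltac:(lra)) as HD0'.
  pose proof (Dv_shift y d Hty Hd0) as HDs. fold D in HDs.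
  set (N' := Nv sigma t (y + d) th) in *. set (D' := Dv sigma t (y + d)) in *.
  assert (HN'b : al * D < N').
  { apply Rlt_le_trans with (RInt (kk sigma t (y + d)) a0 th).
    - apply Rlt_le_trans with (E a0 * RInt (kk sigma t y) a0 th).
      + apply Rlt_le_trans with (r * RInt (kk sigma t y) a0 th).
        * replace (al * D) with (r * (ga * D)) by (unfold r; field; lra).
          apply Rmult_lt_compat_l; lra.
        * apply Rmult_le_compat_r; auto. apply RInt_ge0. apply kk_cont; auto. lra. intros; left; apply kk_pos; auto.
      + rewrite <- RInt_scalR by (apply kk_cont; auto).
        apply RInt_le; try lra; try apply exRI; try apply kk_cont; auto.
        apply cont_mult. apply cont_const. apply kk_cont; auto.
        intros x Hx. rewrite kk_tilt. fold (E x). pose proof (kk_pos sigma t y x). pose proof (HEinc x ltac:(lra)). nra.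
    - apply ILm_ge; auto. apply kk_cont; auto. intros; left; apply kk_pos; auto. lra. }
  apply Rlt_le_trans with (N' / D).
  - apply Rmult_lt_reg_r with D; auto. unfold Rdiv. rewrite Rmult_assoc, Rinv_l, Rmult_1_r by lra. lra.
  - unfold Rdiv. apply Rmult_le_compat_l. lra. apply Rinv_le_contravar; lra.
Qed.

Lemma C_near_t th al : 0 < al < 1 -> exists y, t < y /\ al <= Cf sigma t y th.
Proof.
  intros Hal. set (b0 := (th - t) / sigma). pose proof (Phi_pos b0).
  set (e := (1 - al) * Phi b0).
  assert (He : 0 < e) by (unfold e; nra).
  exists (t + sigma * e). split. nra.
  unfold Cf. fold b0.
  replace ((th - (t + sigma * e)) / sigma) with (b0 - e) by (unfold b0; field; lra).
  pose proof (Phi_lip (b0 - e) b0 ltac:(lra)).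
  apply Rmult_le_reg_r with (Phi b0); auto. unfold Rdiv. rewrite Rmult_assoc, Rinv_l, Rmult_1_r by lra.
  unfold e in *. lra.
Qed.

End G.


Lemma zero_ILm b : ILm (fun _ => 0) b 0.
Proof.
  pose proof (ILm_deriv (fun _ => 0) (fun _ => 0) 0 b (cont_const 0) (fun x => dconst 0 x) (is_lim_const 0 m_infty)) as H.
  cbv beta in H. rewrite Rminus_0_r in H. exact H.
Qed.
Lemma zero_ILp b : ILp (fun _ => 0) b 0.
Proof.
  pose proof (ILp_deriv (fun _ => 0) (fun _ => 0) 0 b (cont_const 0) (fun x => dconst 0 x) (is_lim_const 0 p_infty)) as H.
  cbv beta in H. rewrite Rminus_0_r in H. exact H.
Qed.

Theorem proposition1 (sigma t alpha theta0 : R) (q : R -> R) :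
  0 < sigma -> 0 < alpha < 1 ->
  (forall y, t < y -> sel_post_cdf sigma t y (q y) = alpha) ->
  sel_cond_prob sigma t theta0 (fun y => theta0 <= q y) < alpha.
Proof.
  intros Hs Hal Hq.
  pose (Pi := fun y => sel_post_cdf sigma t y theta0).
  assert (Hiff : forall y, t < y -> (theta0 <= q y <-> Pi y <= alpha)).
  { intros y Hy. unfold Pi. split.
    - intros [H|H]. left. rewrite <- (Hq y Hy). apply (Pi_incr sigma t Hs y theta0 (q y) Hy H).
      right. rewrite H. apply Hq; exact Hy.
    - intros H. destruct (Rle_lt_dec theta0 (q y)) as [|Hlt]; [assumption|]. exfalso.
      pose proof (Pi_incr sigma t Hs y (q y) theta0 Hy Hlt) as H0. rewrite (Hq y Hy) in H0. lra. }
  pose (A := fun y => t < y /\ theta0 <= q y).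
  assert (Hup : forall y y', A y -> y < y' -> A y').
  { intros y y' [Hy Hq'] Hyy'. split. lra. apply Hiff. lra. apply Hiff in Hq'; auto.
    pose proof (Pi_decr_y sigma t Hs y y' theta0 Hy Hyy'). unfold Pi in *. lra. }
  pose (F := fun y => (if excluded_middle_informative (theta0 <= q y) then 1 else 0) * sel_density sigma t theta0 y).
  unfold sel_cond_prob. change (RInt_gen F (Rbar_locally m_infty) (Rbar_locally p_infty) < alpha).
  assert (HFt : forall y, y <= t -> F y = 0).
  { intros y Hy. unfold F, sel_density, sel_fun. destruct (Rlt_dec t y). lra. unfold Rdiv. repeat rewrite ?Rmult_0_r, ?Rmult_0_l. reflexivity. }
  assert (HFn : forall y, ~ (theta0 <= q y) -> F y = 0).
  { intros y Hy. unfold F. destruct (excluded_middle_informative (theta0 <= q y)). tauto. apply Rmult_0_l. }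
  pose (b0 := (theta0 - t) / sigma).
  destruct (classic (exists y, A y)) as [[y1 Hy1] | Hno].
  - destruct (classic (exists y, t < y /\ ~ A y)) as [[y0 [Hy0 Hny0]] | Hall].
    +
      assert (Hlb : forall y, A y -> y0 < y).
      { intros y Hy. destruct (Rlt_le_dec y0 y) as [|Hle]; auto. exfalso. apply Hny0.
        destruct Hle as [Hlt|Heq]. apply Hup with y; auto. subst; auto. }
      pose (E := fun z => exists y, A y /\ z = - y).
      assert (HB : bound E). { exists (- y0). intros z [y [Hy ->]]. pose proof (Hlb y Hy). lra. }
      assert (HE : exists z, E z). { exists (- y1). exists y1; auto. }
      destruct (completeness E HB HE) as [m [Hub Hlub]].
      pose (ys := - m).
      assert (Hinf1 : forall y, A y -> ys <= y).
      { intros y Hy. assert (- y <= m) by (apply Hub; exists y; auto). unfold ys; lra. }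
      assert (Hinf2 : forall y', ys < y' -> exists y, A y /\ y < y').
      { intros y' Hy'. apply NNPP. intros Hn.
        assert (m <= - y').
        { apply Hlub. intros z [y [Hy ->]]. destruct (Rlt_le_dec y y'). exfalso; apply Hn; exists y; auto. lra. }
        unfold ys in Hy'; lra. }
      assert (Hyst : y0 <= ys).
      { assert (m <= - y0). { apply Hlub. intros z [y [Hy ->]]. pose proof (Hlb y Hy); lra. } unfold ys; lra. }
      assert (HAys : A ys).
      { apply NNPP. intros Hn.
        assert (Hgt : alpha < Pi ys).
        { destruct (Rle_lt_dec (Pi ys) alpha) as [Hle|]; auto. exfalso. apply Hn. split. lra.
          apply Hiff; auto. lra. }
        destruct (Pi_rsc sigma t Hs ys theta0 alpha ltac:(lra) ltac:(lra) Hgt) as [y' [Hy' Hpy']].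
        destruct (Hinf2 y' Hy') as [y [Hy Hyy']].
        pose proof (Hinf1 y Hy).
        assert (Pi y <= alpha) by (apply Hiff; [lra| apply Hy]).
        pose proof (Pi_decr_y sigma t Hs y y' theta0 ltac:(lra) Hyy'). unfold Pi in *. lra. }
      assert (HAge : forall y, ys <= y -> A y).
      { intros y [Hy|Hy]. apply Hup with ys; auto. subst; auto. }
      assert (Hts : t < ys) by lra.
      pose (c0 := / sigma * / Phi b0).
      pose (g := fun y => c0 * phi ((y - theta0) / sigma)).
      assert (Hgc : cont g).
      { apply der_cont. intros x. eexists. unfold g. apply dscal. apply daff. lra. apply phi_deriv. }
      assert (HFg : forall y, ys <= y -> g y = F y).
      { intros y Hy. destruct (HAge y Hy) as [Hty Hqy]. unfold F, sel_density, sel_fun, normal_pdf, sel_prob.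
        destruct (excluded_middle_informative (theta0 <= q y)); [|tauto].
        destruct (Rlt_dec t y); [|lra]. unfold g, c0. fold b0. rr. field. repeat split; try apply Phi_neq; lra. }
      pose (G := fun y => (- / Phi b0) * Phi ((y - theta0) / (- sigma))).
      assert (HGd : forall y, is_derive G y (g y)).
      { intros y. unfold G. eapply deq. apply dscal. apply daff. lra. apply Phi_deriv.
        unfold g, c0. replace ((y - theta0) / - sigma) with (- ((y - theta0) / sigma)) by (field; lra).
        rewrite phi_sym. field. repeat split; try apply Phi_neq; lra. }
      assert (HGl : is_lim G p_infty 0).
      { unfold G. replace (Finite 0) with (Rbar_mult (- / Phi b0) 0) by (simpl; f_equal; ring).
        apply (is_lim_scal_l _ (- / Phi b0) p_infty 0).
        apply squeeze_p with (fun y => exp ((-1/sigma) * y + (theta0/sigma + 1/2))).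
        - intros y. split. left; apply Phi_pos.
          pose proof (Phi_bound ((y - theta0) / - sigma)).
          replace (1 * ((y - theta0) / - sigma) + 1 / 2) with (-1/sigma * y + (theta0/sigma + 1/2)) in H by (field; lra).
          exact H.
        - apply lim_exp_lin_p. assert (0 < /sigma) by (apply Rinv_0_lt_compat; lra). unfold Rdiv; lra. }
      pose proof (ILp_deriv g G 0 ys Hgc HGd HGl) as HIg.
      pose (V := 0 - G ys).
      assert (HV : V = Cf sigma t ys theta0).
      { unfold V, G, Cf. fold b0. replace ((ys - theta0) / - sigma) with ((theta0 - ys) / sigma) by (field; lra).
        field. apply Phi_neq. }
      assert (H2 : is_RInt_gen F (at_point ys) (Rbar_locally p_infty) V).
      { apply is_RInt_gen_ext with g.
        - apply Filter_prod with (fun a => a = ys) (fun b => ys < b). reflexivity. exists ys; auto.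
          intros a b -> Hb x Hx. simpl in Hx. rewrite Rmin_left, Rmax_right in Hx by lra. apply HFg. lra.
        - apply ILp_gen; auto. }
      assert (H1 : is_RInt_gen F (Rbar_locally m_infty) (at_point ys) 0).
      { apply is_RInt_gen_ext with (fun _ => 0).
        - apply Filter_prod with (fun a => a < ys) (fun b => b = ys). exists ys; auto. reflexivity.
          intros a b Ha -> x Hx. simpl in Hx. rewrite Rmin_left, Rmax_right in Hx by lra.
          symmetry. destruct (Rle_lt_dec x t). apply HFt; auto. apply HFn. intros Hq'.
          pose proof (Hinf1 x (conj r Hq')). lra.
        - apply ILm_gen. apply cont_const. apply zero_ILm. }
      pose proof (is_RInt_gen_Chasles F ys 0 V H1 H2) as HF.
      rewrite (is_RInt_gen_unique F _ HF).
      change (0 + V < alpha). rewrite HV.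
      pose proof (C_lt_Pi sigma t Hs ys theta0 Hts).
      assert (Pi ys <= alpha) by (apply Hiff; [lra|apply HAys]).
      unfold Pi in *. lra.
    + exfalso.
      destruct (C_near_t sigma t Hs theta0 alpha Hal) as [y [Hty HC]].
      assert (A y). { apply NNPP. intros Hn. apply Hall. exists y; auto. }
      assert (Pi y <= alpha) by (apply Hiff; [lra|apply H]).
      pose proof (C_lt_Pi sigma t Hs y theta0 Hty). unfold Pi in *. lra.
  - assert (HF0 : forall y, F y = 0).
    { intros y. destruct (Rle_lt_dec y t). apply HFt; auto. apply HFn. intros Hq'. apply Hno. exists y. split; auto. }
    assert (H1 : is_RInt_gen F (Rbar_locally m_infty) (at_point 0) 0).
    { apply is_RInt_gen_ext with (fun _ => 0). apply filter_forall. intros; symmetry; auto.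
      apply ILm_gen. apply cont_const. apply zero_ILm. }
    assert (H2 : is_RInt_gen F (at_point 0) (Rbar_locally p_infty) 0).
    { apply is_RInt_gen_ext with (fun _ => 0). apply filter_forall. intros; symmetry; auto.
      apply ILp_gen. apply cont_const. apply zero_ILp. }
    pose proof (is_RInt_gen_Chasles F 0 0 0 H1 H2) as HF.
    rewrite (is_RInt_gen_unique F _ HF).
    change (0 + 0 < alpha). lra.
Qed.
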